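(* Let $(S(t),I(t))$ be a solution of the impulsive system $\dot S=S(A-S)-\beta_0 IS$, $\dot I=\beta_0 IS-(\sigma+g)I$ for $t\neq nT$, $S(nT)=(1-p)S(nT^-)$, $I(nT)=I(nT^-)$, with positive initial conditions in $$\mathcal{M}=\left\{(S,I)\in(\mathbb{R}_0^+)^2:\ 0\le S\le A,\ 0\le S+I\le\tfrac{A(\sigma+g+A)}{\sigma+g}\right\}.$$ If $\mathcal{R}_p<1$, then $\lim_{t\to+\infty}I(t)=0$.
   Context: Parameters: $A\in(0,1]$, $\beta_0>0$, $\sigma,g\ge0$ with $\sigma+g>0$, $p\in[0,1)$, $T>0$; it is assumed $S(t)\le A$. $\mathcal{R}_p=\frac{\beta_0}{\sigma+g}\frac1T\int_0^T\mathcal{S}(t)\,dt$, where $\mathcal{S}(t)=\frac{A[e^{AT}(1-p)-1]}{e^{AT}(1-p)-1+pe^{A(T-t)}}$ for $0\le t<T$; equivalently $\mathcal{R}_p=\frac{A\beta_0}{\sigma+g}\left[\frac{\ln(1-p)}{AT}+1\right]$. *)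

(* Defs.v *)
From Stdlib Require Import Reals.
From Coquelicot Require Import Coquelicot.
Open Scope R_scope.

(* The periodic susceptible profile S(t), 0 <= t < T, from the paper. *)
Definition Sper (A p T t : R) : R :=
  A * (exp (A * T) * (1 - p) - 1) /
  (exp (A * T) * (1 - p) - 1 + p * exp (A * (T - t))).

Definition Rp (A beta0 sigma g p T : R) : R :=
  beta0 / (sigma + g) * (/ T * RInt (Sper A p T) 0 T).

Definition impulse_time (T t : R) : Prop := exists n : nat, t = INR n * T.

Definition impulsive_solution (A beta0 sigma g p T : R) (S I : R -> R) : Prop :=
  (forall t, 0 < t -> ~ impulse_time T t ->
      is_derive S t (S t * (A - S t) - beta0 * I t * S t) /\
      is_derive I t (beta0 * I t * S t - (sigma + g) * I t)) /\
  (forall n : nat,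
      filterlim S (at_right (INR n * T)) (locally (S (INR n * T))) /\
      filterlim I (at_right (INR n * T)) (locally (I (INR n * T)))) /\
  (forall n : nat, (1 <= n)%nat ->
      (exists L : R, filterlim S (at_left (INR n * T)) (locally L) /\
                     S (INR n * T) = (1 - p) * L) /\
      filterlim I (at_left (INR n * T)) (locally (I (INR n * T)))).

(* Main.v *)
Require Import Defs.
From Stdlib Require Import Reals Lra Lia Psatz Classical.
From Stdlib Require Import Ranalysis5.
From Coquelicot Require Import Coquelicot.
Open Scope R_scope.

Lemma ball_R x (e : R) y : ball x e y <-> Rabs (y - x) < e.
Proof. unfold ball; simpl; unfold AbsRing_ball, abs, minus, plus, opp; simpl. tauto. Qed.

Lemma right_lim_ge (f : R -> R) a l c t : a < t ->
  filterlim f (at_right a) (locally l) ->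
  (forall u, a < u <= t -> c <= f u) -> c <= l.
Proof.
  intros Hat Hl Hc. destruct (Rle_or_lt c l) as [H|H]; [exact H|].
  exfalso. assert (He : 0 < c - l) by lra.
  destruct (proj1 (filterlim_locally f l) Hl (mkposreal _ He)) as [d Hd].
  set (y := Rmin t (a + d/2)).
  assert (Hy1 : a < y) by (unfold y; apply Rmin_case; destruct d; simpl; lra).
  assert (Hy2 : y <= t) by (unfold y; apply Rmin_l).
  assert (Hy3 : y <= a + d/2) by (unfold y; apply Rmin_r).
  assert (Hb : ball a d y) by (apply ball_R; destruct d; simpl in *; rewrite Rabs_right; lra).
  specialize (Hd y Hb Hy1). apply ball_R in Hd. simpl in Hd.
  specialize (Hc y (conj Hy1 Hy2)). apply Rabs_def2 in Hd. unfold minus, plus, opp in Hd; simpl in Hd. lra.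
Qed.

Lemma right_lim_le (f : R -> R) a l c t : a < t ->
  filterlim f (at_right a) (locally l) ->
  (forall u, a < u <= t -> f u <= c) -> l <= c.
Proof.
  intros Hat Hl Hc. destruct (Rle_or_lt l c) as [H|H]; [exact H|].
  exfalso. assert (He : 0 < l - c) by lra.
  destruct (proj1 (filterlim_locally f l) Hl (mkposreal _ He)) as [d Hd].
  set (y := Rmin t (a + d/2)).
  assert (Hy1 : a < y) by (unfold y; apply Rmin_case; destruct d; simpl; lra).
  assert (Hy2 : y <= t) by (unfold y; apply Rmin_l).
  assert (Hy3 : y <= a + d/2) by (unfold y; apply Rmin_r).
  assert (Hb : ball a d y) by (apply ball_R; destruct d; simpl in *; rewrite Rabs_right; lra).
  specialize (Hd y Hb Hy1). apply ball_R in Hd. simpl in Hd.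
  specialize (Hc y (conj Hy1 Hy2)). apply Rabs_def2 in Hd. unfold minus, plus, opp in Hd; simpl in Hd. lra.
Qed.

Lemma left_lim_ge (f : R -> R) s b l c : s < b ->
  filterlim f (at_left b) (locally l) ->
  (forall u, s <= u < b -> c <= f u) -> c <= l.
Proof.
  intros Hat Hl Hc. destruct (Rle_or_lt c l) as [H|H]; [exact H|].
  exfalso. assert (He : 0 < c - l) by lra.
  destruct (proj1 (filterlim_locally f l) Hl (mkposreal _ He)) as [d Hd].
  set (y := Rmax s (b - d/2)).
  assert (Hy1 : y < b) by (unfold y; apply Rmax_case; destruct d; simpl; lra).
  assert (Hy2 : s <= y) by (unfold y; apply Rmax_l).
  assert (Hy3 : b - d/2 <= y) by (unfold y; apply Rmax_r).
  assert (Hb : ball b d y) by (apply ball_R; destruct d; simpl in *; rewrite Rabs_left; lra).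
  specialize (Hd y Hb Hy1). apply ball_R in Hd. simpl in Hd.
  specialize (Hc y (conj Hy2 Hy1)). apply Rabs_def2 in Hd. unfold minus, plus, opp in Hd; simpl in Hd. lra.
Qed.

Lemma left_lim_le (f : R -> R) s b l c : s < b ->
  filterlim f (at_left b) (locally l) ->
  (forall u, s <= u < b -> f u <= c) -> l <= c.
Proof.
  intros Hat Hl Hc. destruct (Rle_or_lt l c) as [H|H]; [exact H|].
  exfalso. assert (He : 0 < l - c) by lra.
  destruct (proj1 (filterlim_locally f l) Hl (mkposreal _ He)) as [d Hd].
  set (y := Rmax s (b - d/2)).
  assert (Hy1 : y < b) by (unfold y; apply Rmax_case; destruct d; simpl; lra).
  assert (Hy2 : s <= y) by (unfold y; apply Rmax_l).
  assert (Hy3 : b - d/2 <= y) by (unfold y; apply Rmax_r).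
  assert (Hb : ball b d y) by (apply ball_R; destruct d; simpl in *; rewrite Rabs_left; lra).
  specialize (Hd y Hb Hy1). apply ball_R in Hd. simpl in Hd.
  specialize (Hc y (conj Hy2 Hy1)). apply Rabs_def2 in Hd. unfold minus, plus, opp in Hd; simpl in Hd. lra.
Qed.

Lemma mono_int (f df : R -> R) a b :
  (forall t, a < t < b -> is_derive f t (df t)) ->
  (forall t, a < t < b -> df t <= 0) ->
  filterlim f (at_right a) (locally (f a)) ->
  forall s t, a <= s -> s <= t -> t < b -> f t <= f s.
Proof.
  intros Hd Hn Hr.
  assert (Hint : forall s t, a < s -> s <= t -> t < b -> f t <= f s).
  { intros s t Hs Hst Htb. destruct (Req_dec s t) as [->|Hne]; [lra|].
    destruct (MVT_gen f s t df) as [c [Hc He]].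
    - intros x Hx. rewrite Rmin_left in Hx by lra. rewrite Rmax_right in Hx by lra.
      apply Hd; lra.
    - intros x Hx. rewrite Rmin_left in Hx by lra. rewrite Rmax_right in Hx by lra.
      apply derivable_continuous_pt. exists (df x). apply is_derive_Reals. apply Hd; lra.
    - rewrite Rmin_left in Hc by lra. rewrite Rmax_right in Hc by lra.
      assert (df c <= 0) by (apply Hn; lra). nra. }
  intros s t Hs Hst Htb. destruct (Rle_lt_or_eq_dec a s Hs) as [Hs'|<-].
  - apply Hint; lra.
  - destruct (Rle_lt_or_eq_dec a t Hst) as [Ht'|<-]; [|lra].
    apply (right_lim_ge f a (f a) (f t) t Ht' Hr).
    intros u Hu. apply Hint; lra.
Qed.

Lemma mono_left (f df : R -> R) a b L :
  (forall t, a < t < b -> is_derive f t (df t)) ->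
  (forall t, a < t < b -> df t <= 0) ->
  filterlim f (at_right a) (locally (f a)) ->
  filterlim f (at_left b) (locally L) ->
  forall s, a <= s < b -> L <= f s.
Proof.
  intros Hd Hn Hr Hl s Hs.
  apply (left_lim_le f s b L (f s)); [lra|exact Hl|].
  intros u Hu. apply (mono_int f df a b Hd Hn Hr); lra.
Qed.

Lemma cont_of_der (f : R -> R) x l : is_derive f x l -> continuous f x.
Proof. intro H. apply continuity_pt_filterlim. apply derivable_continuous_pt. exists l. apply is_derive_Reals. exact H. Qed.
Lemma contpt_of_der (f : R -> R) x l : is_derive f x l -> continuity_pt f x.
Proof. intro H. apply derivable_continuous_pt. exists l. apply is_derive_Reals. exact H. Qed.
Lemma lim_mul (F : (R -> Prop) -> Prop) {FF : Filter F} (f g : R -> R) a b : filterlim f F (locally a) -> filterlim g F (locally b) -> filterlim (fun t => f t * g t) F (locally (a*b)).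
Proof. intros. eapply filterlim_comp_2. apply H. apply H0. apply (filterlim_mult (K:=R_AbsRing) a b). Qed.
Lemma lim_comp (F : (R -> Prop) -> Prop) {FF : Filter F} (f g : R -> R) l : filterlim f F (locally l) -> continuous g l -> filterlim (fun t => g (f t)) F (locally (g l)).
Proof. intros. eapply filterlim_comp. apply H. apply H0. Qed.
Lemma lim_right_cont (h : R -> R) a : continuous h a -> filterlim h (at_right a) (locally (h a)).
Proof. intros. eapply filterlim_filter_le_1. apply filter_le_within. apply H. Qed.
Lemma lim_left_cont (h : R -> R) a : continuous h a -> filterlim h (at_left a) (locally (h a)).
Proof. intros. eapply filterlim_filter_le_1. apply filter_le_within. apply H. Qed.
Lemma der_mul (f g : R -> R) x df dg : is_derive f x df -> is_derive g x dg -> is_derive (fun t => f t * g t) x (df * g x + f x * dg).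
Proof. intros. apply (is_derive_mult f g x df dg H H0). intros; apply Rmult_comm. Qed.
Lemma der_eq (f : R -> R) x l l' : is_derive f x l -> l = l' -> is_derive f x l'.
Proof. intros H ->. exact H. Qed.
Lemma der_exp c x : is_derive (fun t => exp (c * t)) x (c * exp (c * x)).
Proof. auto_derive; [auto | ring]. Qed.
Lemma cont_exp c x : continuous (fun t => exp (c * t)) x.
Proof. eapply cont_of_der. apply der_exp. Qed.
Lemma exp_le' x y : x <= y -> exp x <= exp y.
Proof. intros H. destruct (Rle_lt_or_eq_dec _ _ H) as [H'|H'].
  - left; apply exp_increasing; exact H'.
  - subst; right; reflexivity. Qed.

Lemma mono_int_ge (f df : R -> R) a b :
  (forall t, a < t < b -> is_derive f t (df t)) ->
  (forall t, a < t < b -> 0 <= df t) ->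
  filterlim f (at_right a) (locally (f a)) ->
  forall s t, a <= s -> s <= t -> t < b -> f s <= f t.
Proof.
  intros Hd Hn Hr s t H1 H2 H3.
  assert (H := mono_int (fun x => - f x) (fun x => - df x) a b).
  cut (- f t <= - f s); [lra|]. apply H; auto.
  - intros x Hx. apply (is_derive_opp f x (df x)). auto.
  - intros x Hx. specialize (Hn x Hx). lra.
  - apply (lim_comp _ f Ropp). exact Hr. eapply cont_of_der. auto_derive; auto.
Qed.

Lemma mono_left_ge (f df : R -> R) a b L :
  (forall t, a < t < b -> is_derive f t (df t)) ->
  (forall t, a < t < b -> 0 <= df t) ->
  filterlim f (at_right a) (locally (f a)) ->
  filterlim f (at_left b) (locally L) ->
  forall s, a <= s < b -> f s <= L.
Proof.
  intros Hd Hn Hr Hl s Hs.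
  apply (left_lim_ge f s b L (f s)); [lra|exact Hl|].
  intros u Hu. apply (mono_int_ge f df a b Hd Hn Hr); lra.
Qed.

Lemma sign_keep (f : R -> R) a b :
  (forall t, a < t < b -> continuity_pt f t) ->
  filterlim f (at_right a) (locally (f a)) -> 0 < f a ->
  (forall t, a <= t < b -> f t <> 0) -> forall t, a <= t < b -> 0 < f t.
Proof.
  intros Hc Hr Ha Hnz t Ht.
  destruct (Rle_lt_or_eq_dec a t (proj1 Ht)) as [Hat|<-]; [|exact Ha].
  destruct (Rlt_or_le 0 (f t)) as [H|H]; [exact H|exfalso].
  assert (Hneg : f t < 0) by (destruct H as [H|H]; [exact H| exfalso; apply (Hnz t Ht); exact H]).
  destruct (classic (exists u, a < u <= t /\ 0 < f u)) as [[u [Hu Hfu]]|Hno].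
  - assert (Hut : u < t) by (destruct (Rle_lt_or_eq_dec _ _ (proj2 Hu)) as [h|h]; [exact h| subst; lra]).
    destruct (IVT_interv (fun x => - f x) u t) as [z [Hz Hfz]].
    + intros x Hx. apply continuity_pt_opp. apply Hc. lra.
    + exact Hut.
    + lra.
    + lra.
    + apply (Hnz z); lra.
  - assert (f a <= 0); [|lra].
    apply (right_lim_le f a (f a) 0 t Hat Hr).
    intros u Hu. destruct (Rle_or_lt (f u) 0) as [h|h]; [exact h|].
    exfalso. apply Hno. exists u. split; assumption.
Qed.

Lemma lim_mul_r a (f g : R -> R) la lb : filterlim f (at_right a) (locally la) -> filterlim g (at_right a) (locally lb) -> filterlim (fun t => f t * g t) (at_right a) (locally (la*lb)).
Proof. intros H1 H2; apply (lim_mul _ f g la lb H1 H2). Qed.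
Lemma lim_mul_l a (f g : R -> R) la lb : filterlim f (at_left a) (locally la) -> filterlim g (at_left a) (locally lb) -> filterlim (fun t => f t * g t) (at_left a) (locally (la*lb)).
Proof. intros H1 H2; apply (lim_mul _ f g la lb H1 H2). Qed.
Lemma lim_comp_r a (f g : R -> R) l : filterlim f (at_right a) (locally l) -> continuous g l -> filterlim (fun t => g (f t)) (at_right a) (locally (g l)).
Proof. intros H1 H2; apply (lim_comp _ f g l H1 H2). Qed.
Lemma lim_comp_l a (f g : R -> R) l : filterlim f (at_left a) (locally l) -> continuous g l -> filterlim (fun t => g (f t)) (at_left a) (locally (g l)).
Proof. intros H1 H2; apply (lim_comp _ f g l H1 H2). Qed.
Lemma lim_right_exp c a : filterlim (fun t => exp (c*t)) (at_right a) (locally (exp (c*a))).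
Proof. apply (lim_right_cont (fun t => exp (c*t))), cont_exp. Qed.
Lemma lim_left_exp c a : filterlim (fun t => exp (c*t)) (at_left a) (locally (exp (c*a))).
Proof. apply (lim_left_cont (fun t => exp (c*t))), cont_exp. Qed.
Lemma lim_add (F : (R -> Prop) -> Prop) {FF : Filter F} (f g : R -> R) a b : filterlim f F (locally a) -> filterlim g F (locally b) -> filterlim (fun t => f t + g t) F (locally (a+b)).
Proof. intros. eapply filterlim_comp_2. apply H. apply H0. apply (filterlim_plus (K:=R_AbsRing) (V:=R_NormedModule) a b). Qed.
Lemma lim_add_r a (f g : R -> R) la lb : filterlim f (at_right a) (locally la) -> filterlim g (at_right a) (locally lb) -> filterlim (fun t => f t + g t) (at_right a) (locally (la+lb)).
Proof. intros H1 H2; apply (lim_add _ f g la lb H1 H2). Qed.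
Lemma lim_add_l a (f g : R -> R) la lb : filterlim f (at_left a) (locally la) -> filterlim g (at_left a) (locally lb) -> filterlim (fun t => f t + g t) (at_left a) (locally (la+lb)).
Proof. intros H1 H2; apply (lim_add _ f g la lb H1 H2). Qed.
Lemma cont_inv x : x <> 0 -> continuous Rinv x.
Proof. intros H. eapply cont_of_der. auto_derive; auto. Qed.

Lemma exp_shift (X Y c t a : R) : X * exp (c * t) <= Y * exp (c * a) -> X <= Y * exp (c * (a - t)).
Proof.
  intros H. assert (Hp := exp_pos (c * t)).
  assert (E : exp (c * (a - t)) * exp (c * t) = exp (c * a)) by (rewrite <- exp_plus; f_equal; ring).
  apply (Rmult_le_reg_r (exp (c * t))); auto. rewrite Rmult_assoc, E. exact H.
Qed.

Lemma exp_shift_ge (X Y c t a : R) : Y * exp (c * a) <= X * exp (c * t) -> Y * exp (c * (a - t)) <= X.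
Proof.
  intros H. assert (Hp := exp_pos (c * t)).
  assert (E : exp (c * (a - t)) * exp (c * t) = exp (c * a)) by (rewrite <- exp_plus; f_equal; ring).
  apply (Rmult_le_reg_r (exp (c * t))); auto. rewrite Rmult_assoc, E. exact H.
Qed.

Lemma pos_step (A b0 k a b : R) (S I : R -> R) :
  0 < A -> 0 < b0 -> 0 < k -> a < b ->
  (forall t, a < t < b -> is_derive S t (S t * (A - S t) - b0 * I t * S t) /\
                          is_derive I t (b0 * I t * S t - k * I t)) ->
  (forall t, a <= t < b -> S t <= A) ->
  filterlim S (at_right a) (locally (S a)) ->
  filterlim I (at_right a) (locally (I a)) ->
  0 < S a -> 0 < I a ->
  (forall t, a <= t < b -> 0 < S t /\ 0 < I t) /\
  (forall L, filterlim S (at_left b) (locally L) -> 0 < L) /\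
  (forall L, filterlim I (at_left b) (locally L) -> 0 < L).
Proof.
  intros HA Hb0 Hk Hab Hd HSA HrS HrI HS0 HI0.
  set (c1 := 2 * b0 * A).
  assert (Hf1 : forall t, a <= t < b -> I t * I t * exp (-c1 * t) <= I a * I a * exp (-c1 * a)).
  { intros t Ht.
    apply (mono_int (fun t => I t * I t * exp (-c1 * t))
             (fun t => 2 * (I t * I t) * exp (-c1 * t) * (b0 * (S t - A) - k)) a b); try lra.
    - intros s Hs. destruct (Hd s Hs) as [_ HI]. eapply der_eq.
      + apply der_mul. apply der_mul; exact HI. apply der_exp.
      + cbv beta; unfold c1; match goal with |- ?x = ?y => change (@eq R x y) end; ring.
    - intros s Hs. assert (HS := HSA s (conj (Rlt_le _ _ (proj1 Hs)) (proj2 Hs))).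
      assert (h1 : 0 <= I s * I s) by nra. assert (h2 := exp_pos (- c1 * s)).
      assert (h3 : 0 <= 2 * (I s * I s) * exp (- c1 * s)) by (apply Rmult_le_pos; nra).
      assert (h4 : b0 * (S s - A) - k <= 0) by nra. nra.
    - apply lim_mul_r. apply lim_mul_r; assumption. apply lim_right_exp. }
  set (B2 := I a * I a * exp (c1 * (b - a))).
  assert (HIb : forall t, a <= t < b -> I t * I t <= B2).
  { intros t Ht. specialize (Hf1 t Ht). apply exp_shift in Hf1.
    eapply Rle_trans; [exact Hf1|]. unfold B2. apply Rmult_le_compat_l; [nra|].
    apply exp_le'. assert (0 < b0 * A) by nra. unfold c1; nra. }
  set (N := b0 * (1 + B2)).
  assert (Hf2 : forall s t, a <= s -> s <= t -> t < b -> S s * S s * exp (2 * N * s) <= S t * S t * exp (2 * N * t)).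
  { apply (mono_int_ge (fun t => S t * S t * exp (2 * N * t))
             (fun t => 2 * (S t * S t) * exp (2 * N * t) * ((A - S t) + (N - b0 * I t))) a b).
    - intros s Hs. destruct (Hd s Hs) as [HS _]. eapply der_eq.
      + apply der_mul. apply der_mul; exact HS. apply der_exp.
      + cbv beta; match goal with |- ?x = ?y => change (@eq R x y) end; ring.
    - intros s Hs. assert (HS := HSA s (conj (Rlt_le _ _ (proj1 Hs)) (proj2 Hs))).
      assert (HI := HIb s (conj (Rlt_le _ _ (proj1 Hs)) (proj2 Hs))).
      assert (h1 : 0 <= S s * S s) by nra. assert (h2 := exp_pos (2 * N * s)).
      assert (h3 : 0 <= 2 * (S s * S s) * exp (2 * N * s)) by (apply Rmult_le_pos; nra).
      assert (h5 : I s <= 1 + I s * I s) by nra.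
        assert (h6 : 0 <= b0 * (1 + B2 - I s)) by (apply Rmult_le_pos; lra).
        assert (h4 : 0 <= (A - S s) + (N - b0 * I s)) by (unfold N; lra). apply Rmult_le_pos; lra.
    - apply lim_mul_r. apply lim_mul_r; assumption. apply lim_right_exp. }
  assert (HSp : forall t, a <= t < b -> 0 < S t).
  { apply (sign_keep S a b); auto.
    - intros t Ht. eapply contpt_of_der. apply (Hd t Ht).
    - intros t Ht Hz. specialize (Hf2 a t (Rle_refl a) (proj1 Ht) (proj2 Ht)).
      rewrite Hz in Hf2. assert (h := exp_pos (2 * N * a)).
      assert (0 < S a * S a * exp (2 * N * a)) by (apply Rmult_lt_0_compat; nra). lra. }
  assert (Hf3 : forall s t, a <= s -> s <= t -> t < b -> I s * I s * exp (2 * k * s) <= I t * I t * exp (2 * k * t)).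
  { apply (mono_int_ge (fun t => I t * I t * exp (2 * k * t))
             (fun t => 2 * (I t * I t) * exp (2 * k * t) * (b0 * S t)) a b).
    - intros s Hs. destruct (Hd s Hs) as [_ HI]. eapply der_eq.
      + apply der_mul. apply der_mul; exact HI. apply der_exp.
      + cbv beta; match goal with |- ?x = ?y => change (@eq R x y) end; ring.
    - intros s Hs. assert (HS := HSp s (conj (Rlt_le _ _ (proj1 Hs)) (proj2 Hs))).
      assert (h1 : 0 <= I s * I s) by nra. assert (h2 := exp_pos (2 * k * s)).
      assert (h3 : 0 <= 2 * (I s * I s) * exp (2 * k * s)) by (apply Rmult_le_pos; nra).
      apply Rmult_le_pos; nra.
    - apply lim_mul_r. apply lim_mul_r; assumption. apply lim_right_exp. }
  assert (HIp : forall t, a <= t < b -> 0 < I t).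
  { apply (sign_keep I a b); auto.
    - intros t Ht. eapply contpt_of_der. apply (Hd t Ht).
    - intros t Ht Hz. specialize (Hf3 a t (Rle_refl a) (proj1 Ht) (proj2 Ht)).
      rewrite Hz in Hf3. assert (h := exp_pos (2 * k * a)).
      assert (0 < I a * I a * exp (2 * k * a)) by (apply Rmult_lt_0_compat; nra). lra. }
  split; [intros t Ht; split; auto|split].
  - intros L HL.
    assert (H1 : S a * S a * exp (2 * N * a) <= L * L * exp (2 * N * b)).
    { apply (mono_left_ge (fun t => S t * S t * exp (2 * N * t))
             (fun t => 2 * (S t * S t) * exp (2 * N * t) * ((A - S t) + (N - b0 * I t))) a b).
      - intros s Hs. destruct (Hd s Hs) as [HS _]. eapply der_eq.
        + apply der_mul. apply der_mul; exact HS. apply der_exp.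
        + cbv beta; match goal with |- ?x = ?y => change (@eq R x y) end; ring.
      - intros s Hs. assert (HS := HSA s (conj (Rlt_le _ _ (proj1 Hs)) (proj2 Hs))).
        assert (HI := HIb s (conj (Rlt_le _ _ (proj1 Hs)) (proj2 Hs))).
        assert (h1 : 0 <= S s * S s) by nra. assert (h2 := exp_pos (2 * N * s)).
        assert (h3 : 0 <= 2 * (S s * S s) * exp (2 * N * s)) by (apply Rmult_le_pos; nra).
        assert (h5 : I s <= 1 + I s * I s) by nra.
        assert (h6 : 0 <= b0 * (1 + B2 - I s)) by (apply Rmult_le_pos; lra).
        assert (h4 : 0 <= (A - S s) + (N - b0 * I s)) by (unfold N; lra). apply Rmult_le_pos; lra.
      - apply lim_mul_r. apply lim_mul_r; assumption. apply lim_right_exp.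
      - apply lim_mul_l. apply lim_mul_l; assumption. apply lim_left_exp.
      - lra. }
    assert (H2 : 0 <= L).
    { apply (left_lim_ge S a b L 0 Hab HL). intros u Hu. left. apply HSp; lra. }
    destruct H2 as [H2|H2]; [exact H2|]. subst L.
    assert (h := exp_pos (2 * N * a)).
    assert (0 < S a * S a * exp (2 * N * a)) by (apply Rmult_lt_0_compat; nra). lra.
  - intros L HL.
    assert (H1 : I a * I a * exp (2 * k * a) <= L * L * exp (2 * k * b)).
    { apply (mono_left_ge (fun t => I t * I t * exp (2 * k * t))
             (fun t => 2 * (I t * I t) * exp (2 * k * t) * (b0 * S t)) a b).
      - intros s Hs. destruct (Hd s Hs) as [_ HI]. eapply der_eq.
        + apply der_mul. apply der_mul; exact HI. apply der_exp.
        + cbv beta; match goal with |- ?x = ?y => change (@eq R x y) end; ring.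
      - intros s Hs. assert (HS := HSp s (conj (Rlt_le _ _ (proj1 Hs)) (proj2 Hs))).
        assert (h1 : 0 <= I s * I s) by nra. assert (h2 := exp_pos (2 * k * s)).
        assert (h3 : 0 <= 2 * (I s * I s) * exp (2 * k * s)) by (apply Rmult_le_pos; nra).
        apply Rmult_le_pos; nra.
      - apply lim_mul_r. apply lim_mul_r; assumption. apply lim_right_exp.
      - apply lim_mul_l. apply lim_mul_l; assumption. apply lim_left_exp.
      - lra. }
    assert (H2 : 0 <= L).
    { apply (left_lim_ge I a b L 0 Hab HL). intros u Hu. left. apply HIp; lra. }
    destruct H2 as [H2|H2]; [exact H2|]. subst L.
    assert (h := exp_pos (2 * k * a)).
    assert (0 < I a * I a * exp (2 * k * a)) by (apply Rmult_lt_0_compat; nra). lra.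
Qed.

Definition wt (A' c tau : R) := / A' + c * exp (- A' * tau).

Lemma cmp_step (A A' b0 k c a T L : R) (S I : R -> R) :
  0 < A -> A <= A' -> 0 < b0 -> 0 < T ->
  (forall t, a < t < a + T -> is_derive S t (S t * (A - S t) - b0 * I t * S t)) ->
  (forall t, a <= t < a + T -> 0 < S t /\ 0 < I t) ->
  filterlim S (at_right a) (locally (S a)) ->
  filterlim S (at_left (a + T)) (locally L) -> 0 < L ->
  (forall t, a <= t < a + T ->
     (/ S a - wt A' c 0) * exp (A' * a) <= (/ S t - wt A' c (t - a)) * exp (A' * t)) /\
  (/ S a - wt A' c 0) * exp (A' * a) <= (/ L - wt A' c T) * exp (A' * (a + T)).
Proof.
  intros HA HAA Hb0 HT Hd Hpos HrS HlS HL.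
  assert (HA' : 0 < A') by lra.
  set (D := fun t => (/ S t + - wt A' c (t - a)) * exp (A' * t)).
  set (dD := fun t => exp (A' * t) * (((A' - A) + b0 * I t) / S t)).
  assert (Hder : forall t, a < t < a + T -> is_derive D t (dD t)).
  { intros t Ht. destruct (Hpos t (conj (Rlt_le _ _ (proj1 Ht)) (proj2 Ht))) as [HSt HIt].
    assert (Hw : is_derive (fun s => - wt A' c (s - a)) t (c * A' * exp (- A' * (t - a)))).
    { unfold wt. auto_derive; auto. unfold Rminus. ring. }
    assert (Hi := is_derive_inv S t _ (Hd t Ht) (Rgt_not_eq _ _ HSt)).
    eapply der_eq. apply der_mul. apply (is_derive_plus (fun s => / S s) (fun s => - wt A' c (s - a)) t _ _ Hi Hw).
    apply der_exp. unfold dD, wt. cbv beta. unfold plus; simpl.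
    match goal with |- ?x = ?y => change (@eq R x y) end.
    field. split; lra. }
  assert (Hdpos : forall t, a < t < a + T -> 0 <= dD t).
  { intros t Ht. destruct (Hpos t (conj (Rlt_le _ _ (proj1 Ht)) (proj2 Ht))) as [HSt HIt].
    unfold dD. apply Rmult_le_pos. left; apply exp_pos.
    apply Rdiv_le_0_compat; [nra|lra]. }
  assert (Hr : filterlim D (at_right a) (locally (D a))).
  { unfold D. apply lim_mul_r; [|apply lim_right_exp]. apply lim_add_r.
    - apply (lim_comp_r a S Rinv). exact HrS. apply cont_inv. destruct (Hpos a) as [h _]; lra.
    - apply (lim_right_cont (fun s => - wt A' c (s - a))). eapply cont_of_der.
      unfold wt. auto_derive; auto. }
  split.
  - intros t Ht. assert (h := mono_int_ge D dD a (a + T) Hder Hdpos Hr a t (Rle_refl a) (proj1 Ht) (proj2 Ht)).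
    unfold D in h. replace (a - a) with 0 in h by ring. exact h.
  - assert (Hl : filterlim D (at_left (a + T)) (locally ((/ L + - wt A' c T) * exp (A' * (a + T))))).
    { unfold D. apply lim_mul_l; [|apply lim_left_exp]. apply lim_add_l.
      - apply (lim_comp_l (a + T) S Rinv). exact HlS. apply cont_inv. lra.
      - replace T with ((a + T) - a) at 2 by ring.
        apply (lim_left_cont (fun s => - wt A' c (s - a))). eapply cont_of_der.
        unfold wt. auto_derive; auto. }
    assert (haT : a <= a < a + T) by lra.
    assert (h := mono_left_ge D dD a (a + T) _ Hder Hdpos Hr Hl a haT).
    unfold D in h. replace (a - a) with 0 in h by ring. exact h.
Qed.

Lemma RInt_Sper A p T : 0 < A -> 0 <= p < 1 -> 0 < T -> RInt (Sper A p T) 0 T = A * T + ln (1 - p).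
Proof.
  intros HA Hp HT.
  set (e := exp (A * T)).
  assert (He : 1 < e) by (unfold e; rewrite <- exp_0; apply exp_increasing; nra).
  set (den := fun t => exp (A * T) * (1 - p) - 1 + p * exp (A * (T - t))).
  assert (Hden : forall t, t <= T -> 0 < den t).
  { intros t Ht. unfold den. assert (1 <= exp (A * (T - t))).
    { rewrite <- exp_0. apply exp_le'. nra. }
    fold e. nra. }
  set (G := fun t => A * t + ln (den t)).
  assert (HG : is_RInt (Sper A p T) 0 T (minus (G T) (G 0))).
  { apply (is_RInt_derive (V:=R_CompleteNormedModule) G).
    - intros x Hx. rewrite Rmin_left in Hx by lra. rewrite Rmax_right in Hx by lra.
      assert (Hd := Hden x (proj2 Hx)). unfold G, den in *. unfold Sper.
      auto_derive. exact Hd. replace (T + - x) with (T - x) by ring. field. lra.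
    - intros x Hx. rewrite Rmin_left in Hx by lra. rewrite Rmax_right in Hx by lra.
      assert (Hd := Hden x (proj2 Hx)). unfold den in Hd. unfold Sper.
      eapply cont_of_der. auto_derive. replace (T + - x) with (T - x) by ring. lra. reflexivity. }
  rewrite (is_RInt_unique _ _ _ _ HG). unfold minus, plus, opp; simpl.
  unfold G, den. fold e. replace (T - T) with 0 by ring. replace (T - 0) with T by ring.
  rewrite Rmult_0_r, exp_0. fold e.
  replace (e * (1 - p) - 1 + p * 1) with ((1 - p) * (e - 1)) by ring.
  replace (e * (1 - p) - 1 + p * e) with (e - 1) by ring.
  rewrite ln_mult by lra. ring.
Qed.

Lemma Rp_bound A b0 k p T : 0 < A -> 0 < b0 -> 0 < k -> 0 <= p < 1 -> 0 < T ->
  b0 / k * (/ T * RInt (Sper A p T) 0 T) < 1 -> b0 * (A * T + ln (1 - p)) < k * T.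
Proof.
  intros HA Hb Hk Hp HT H. rewrite RInt_Sper in H by auto.
  set (X := b0 / k * (/ T * (A * T + ln (1 - p)))) in *.
  assert (E : b0 * (A * T + ln (1 - p)) = X * (k * T)) by (unfold X; field; lra).
  rewrite E. assert (0 < k * T) by nra. nra.
Qed.

Lemma ln_le' x y : 0 < x -> x <= y -> ln x <= ln y.
Proof. intros Hx Hxy. destruct (Rle_lt_or_eq_dec _ _ Hxy) as [h|h].
  - left; apply ln_increasing; auto.
  - subst; right; reflexivity. Qed.

Lemma wt_pos A' c tau : 0 < A' -> 0 <= c -> / A' <= wt A' c tau.
Proof. intros. unfold wt. assert (0 < exp (- A' * tau)) by apply exp_pos. nra. Qed.

Lemma decay_step (b0 k A' c eps a T : R) (S I : R -> R) :
  0 < A' -> 0 <= c -> 0 < b0 -> 0 <= k -> 0 < T -> 0 <= eps ->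
  (forall t, a < t < a + T -> is_derive I t (b0 * I t * S t - k * I t)) ->
  (forall t, a < t < a + T -> S t <= (1 + eps) / wt A' c (t - a)) ->
  filterlim I (at_right a) (locally (I a)) ->
  filterlim I (at_left (a + T)) (locally (I (a + T))) ->
  (forall t, a <= t < a + T -> I t * I t <= I a * I a * exp (2 * b0 * (1 + eps) * (A' * T))) /\
  I (a + T) * I (a + T) <= I a * I a *
     exp (2 * b0 * (1 + eps) * (A' * T + ln (wt A' c T) - ln (wt A' c 0)) - 2 * k * T).
Proof.
  intros HA' Hc Hb0 Hk HT Heps Hd HS HrI HlI.
  assert (Hw : forall tau, / A' <= wt A' c tau) by (intros; apply wt_pos; auto).
  assert (HiA : 0 < / A') by (apply Rinv_0_lt_compat; auto).
  set (Phi := fun t => 2 * k * t - 2 * b0 * (1 + eps) * (A' * (t - a) + ln (wt A' c (t - a)))).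
  set (Z := fun t => I t * I t * exp (Phi t)).
  set (dZ := fun t => 2 * (I t * I t) * exp (Phi t) * (b0 * (S t - (1 + eps) / wt A' c (t - a)))).
  assert (Hder : forall t, a < t < a + T -> is_derive Z t (dZ t)).
  { intros t Ht. assert (Hwt := Hw (t - a)).
    assert (HP : is_derive (fun s => exp (Phi s)) t
                  (exp (Phi t) * (2 * k - 2 * b0 * (1 + eps) / wt A' c (t - a)))).
    { unfold Phi, wt in *. auto_derive.
      - replace (t + - a) with (t - a) by ring. lra.
      - replace (t + - a) with (t - a) by ring. match goal with |- ?x = ?y => change (@eq R x y) end. unfold Rminus in *. field. assert (0 < exp (- A' * (t + - a))) by apply exp_pos. split; [lra|nra]. }
    eapply der_eq. apply der_mul. apply der_mul; apply Hd; exact Ht. exact HP.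
    unfold dZ. cbv beta. match goal with |- ?x = ?y => change (@eq R x y) end.
    field. lra. }
  assert (Hdn : forall t, a < t < a + T -> dZ t <= 0).
  { intros t Ht. unfold dZ. assert (h1 := HS t Ht). assert (h2 := exp_pos (Phi t)).
    assert (h3 : 0 <= 2 * (I t * I t) * exp (Phi t)) by (apply Rmult_le_pos; nra).
    assert (h4 : b0 * (S t - (1 + eps) / wt A' c (t - a)) <= 0) by nra. nra. }
  assert (HcP : forall x, continuous (fun s => exp (Phi s)) x).
  { intros x. eapply cont_of_der. unfold Phi, wt. auto_derive.
    - assert (h := Hw (x - a)). unfold wt in h. replace (x + - a) with (x - a) by ring. lra.
    - reflexivity. }
  assert (Hr : filterlim Z (at_right a) (locally (Z a))).
  { unfold Z. apply lim_mul_r. apply lim_mul_r; auto. apply (lim_right_cont (fun s => exp (Phi s))). apply HcP. }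
  assert (Hl : filterlim Z (at_left (a + T)) (locally (Z (a + T)))).
  { unfold Z. apply lim_mul_l. apply lim_mul_l; auto. apply (lim_left_cont (fun s => exp (Phi s))). apply HcP. }
  assert (Hexp : forall t, Z t <= Z a -> I t * I t <= I a * I a * exp (Phi a - Phi t)).
  { intros t H. unfold Z in H. assert (h := exp_pos (Phi t)).
    apply (Rmult_le_reg_r (exp (Phi t))); auto. rewrite (Rmult_assoc (I a * I a)), <- exp_plus.
    replace (Phi a - Phi t + Phi t) with (Phi a) by ring. exact H. }
  assert (HPa : Phi a = 2 * k * a - 2 * b0 * (1 + eps) * ln (wt A' c 0)).
  { unfold Phi. replace (a - a) with 0 by ring. ring_simplify. ring. }
  split.
  - intros t Ht. eapply Rle_trans. apply Hexp. apply (mono_int Z dZ a (a + T) Hder Hdn Hr); lra.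
    apply Rmult_le_compat_l; [nra|]. apply exp_le'.
    rewrite HPa. unfold Phi.
    assert (h1 : ln (wt A' c (t - a)) <= ln (wt A' c 0)).
    { apply ln_le'. specialize (Hw (t - a)). lra. unfold wt. rewrite Rmult_0_r, exp_0.
      assert (exp (- A' * (t - a)) <= 1) by (rewrite <- exp_0; apply exp_le'; nra). nra. }
    assert (h2 : 0 <= b0 * (1 + eps)) by nra.
    assert (h3 : A' * (t - a) <= A' * T) by nra.
    assert (h4 : 0 <= k * (t - a)) by nra.
    assert (h5 : b0 * (1 + eps) * (ln (wt A' c (t - a)) - ln (wt A' c 0)) <= 0) by nra.
    assert (h6 : b0 * (1 + eps) * (A' * (t - a)) <= b0 * (1 + eps) * (A' * T)) by nra.
    nra.
  - eapply Rle_trans. apply Hexp. eapply (mono_left Z dZ a (a + T) (Z (a + T)) Hder Hdn Hr Hl a). lra.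
    apply Rmult_le_compat_l; [nra|]. right. f_equal. rewrite HPa. unfold Phi.
    replace (a + T - a) with T by ring. ring.
Qed.

Lemma floor_ex T t : 0 < T -> 0 <= t -> exists n, INR n * T <= t < INR (S n) * T.
Proof.
  intros HT Ht. destruct (INR_archimed T t HT) as [m Hm].
  assert (Hgen : forall m, t < INR m * T -> exists n, INR n * T <= t < INR (S n) * T).
  { induction m0 as [|m0 IH]; intros H.
    - simpl in H. lra.
    - destruct (Rlt_or_le t (INR m0 * T)) as [h|h].
      + apply IH; exact h.
      + exists m0. split; assumption. }
  apply (Hgen m). lra.
Qed.

Lemma interior_ok T n t : 0 < T -> INR n * T < t < INR (S n) * T -> 0 < t /\ ~ impulse_time T t.
Proof.
  intros HT Ht. split.
  - assert (0 <= INR n * T) by (apply Rmult_le_pos; [apply pos_INR|lra]). lra.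
  - intros [m Hm]. subst t.
    assert (h1 : INR n < INR m) by (apply (Rmult_lt_reg_r T); lra).
    assert (h2 : INR m < INR (S n)) by (apply (Rmult_lt_reg_r T); lra).
    apply INR_lt in h1. apply INR_lt in h2. lia.
Qed.

Lemma exp_INR n x : exp (INR n * x) = exp x ^ n.
Proof.
  induction n as [|n IH].
  - simpl. rewrite Rmult_0_l. apply exp_0.
  - rewrite S_INR. replace ((INR n + 1) * x) with (INR n * x + x) by ring.
    rewrite exp_plus, IH. simpl. ring.
Qed.

Lemma final_lim (I : R -> R) T K kap N0 C0 : 0 < T -> 0 <= K -> 0 <= kap < 1 -> 0 <= C0 ->
  (forall m, I (INR (N0 + m) * T) * I (INR (N0 + m) * T) <= C0 * kap ^ m) ->
  (forall n t, (N0 <= n)%nat -> INR n * T <= t < INR (S n) * T ->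
      I t * I t <= I (INR n * T) * I (INR n * T) * K) ->
  is_lim I p_infty 0.
Proof.
  intros HT HK Hk HC Hm Hin.
  unfold is_lim. intros P [e HP]. simpl in HP.
  set (C := K * C0).
  assert (HC' : 0 <= C) by (unfold C; nra).
  assert (He : 0 < e) by (destruct e; simpl; lra).
  assert (Hy : 0 < e * e / (C + 1)) by (apply Rdiv_lt_0_compat; nra).
  destruct (pow_lt_1_zero kap ltac:(rewrite Rabs_right; lra) _ Hy) as [N HN].
  exists (INR (N0 + N) * T). intros x Hx. apply HP. apply ball_R.
  assert (Hx0 : 0 <= x) by (assert (0 <= INR (N0 + N) * T) by (apply Rmult_le_pos; [apply pos_INR|lra]); lra).
  destruct (floor_ex T x HT Hx0) as [n [Hn1 Hn2]].
  assert (Hnn : (N0 + N < S n)%nat).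
  { apply INR_lt. apply (Rmult_lt_reg_r T); lra. }
  destruct (Nat.le_exists_sub N0 n ltac:(lia)) as [m [Hm' _]].
  assert (HmN : (m >= N)%nat) by lia.
  specialize (HN m HmN). rewrite Rabs_right in HN by (apply Rle_ge, pow_le; lra).
  assert (H1 := Hin n x ltac:(lia) (conj Hn1 Hn2)).
  assert (H2 := Hm m). replace (N0 + m)%nat with n in H2 by lia.
  assert (H3 : I x * I x <= C * kap ^ m).
  { eapply Rle_trans. exact H1. unfold C.
    assert (0 <= I (INR n * T) * I (INR n * T)) by nra. nra. }
  assert (H4 : C * kap ^ m <= C * (e * e / (C + 1))) by (apply Rmult_le_compat_l; lra).
  assert (H5 : C * (e * e / (C + 1)) < e * e).
  { assert (E : C * (e * e / (C + 1)) = e * e - e * e / (C + 1)) by (field; lra). lra. }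
  rewrite Rminus_0_r. destruct (Rcase_abs (I x)) as [h|h].
  - rewrite Rabs_left by exact h. nra.
  - rewrite Rabs_right by exact h. nra.
Qed.

Theorem lemma10 (A beta0 sigma g p T : R) (S I : R -> R)
  (hA : 0 < A <= 1) (hbeta0 : 0 < beta0)
  (hsigma : 0 <= sigma) (hg : 0 <= g) (hsg : 0 < sigma + g)
  (hp : 0 <= p < 1) (hT : 0 < T)
  (hsol : impulsive_solution A beta0 sigma g p T S I)
  (hS0 : 0 < S 0) (hI0 : 0 < I 0)
  (hM1 : S 0 <= A)
  (hM2 : S 0 + I 0 <= A * (sigma + g + A) / (sigma + g))
  (hSA : forall t, 0 <= t -> S t <= A)
  (hR : Rp A beta0 sigma g p T < 1) :
  is_lim I p_infty 0.
Proof.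
  destruct hsol as [Hder [Hright Hleft]].
  set (k := sigma + g) in *.
  assert (HSn : forall n, INR (Datatypes.S n) * T = INR n * T + T) by (intros; rewrite S_INR; ring).
  assert (Ha0 : forall n, 0 <= INR n * T) by (intros; apply Rmult_le_pos; [apply pos_INR|lra]).
  assert (Hint : forall n t, INR n * T < t < INR n * T + T ->
     is_derive S t (S t * (A - S t) - beta0 * I t * S t) /\
     is_derive I t (beta0 * I t * S t - k * I t)).
  { intros n t Ht. rewrite <- HSn in Ht. destruct (interior_ok T n t hT Ht) as [h1 h2].
    apply Hder; auto. }
  assert (HSA' : forall n t, INR n * T <= t < INR n * T + T -> S t <= A).
  { intros n t Ht. apply hSA. specialize (Ha0 n). lra. }
  assert (HlS : forall n, exists L, filterlim S (at_left (INR n * T + T)) (locally L) /\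
                         S (INR n * T + T) = (1 - p) * L).
  { intros n. rewrite <- HSn. apply (Hleft (Datatypes.S n)). lia. }
  assert (HlI : forall n, filterlim I (at_left (INR n * T + T)) (locally (I (INR n * T + T)))).
  { intros n. rewrite <- HSn. apply (Hleft (Datatypes.S n)). lia. }
  assert (HPS := fun n => pos_step A beta0 k (INR n * T) (INR n * T + T) S I (proj1 hA) hbeta0 hsg
             ltac:(lra) (Hint n) (HSA' n) (proj1 (Hright n)) (proj2 (Hright n))).
  assert (Hpos : forall n, 0 < S (INR n * T) /\ 0 < I (INR n * T)).
  { induction n as [|n IH].
    - simpl. rewrite Rmult_0_l. auto.
    - destruct (HPS n (proj1 IH) (proj2 IH)) as [_ [H1 H2]].
      rewrite HSn. destruct (HlS n) as [L [HL HSL]]. split.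
      + rewrite HSL. apply Rmult_lt_0_compat; [lra|]. apply H1; exact HL.
      + apply H2. apply HlI. }
  assert (Hposi : forall n t, INR n * T <= t < INR n * T + T -> 0 < S t /\ 0 < I t).
  { intros n t Ht. destruct (HPS n (proj1 (Hpos n)) (proj2 (Hpos n))) as [H _]. auto. }
  assert (Hgap : beta0 * (A * T + ln (1 - p)) < k * T).
  { apply Rp_bound; auto. lra. }
  set (L0 := A * T + ln (1 - p)) in *.
  set (q := k * T / beta0).
  assert (Hq : beta0 * q = k * T) by (unfold q; field; lra).
  assert (HkT : 0 < k * T) by nra.
  set (L1 := (q + Rmax L0 0) / 2).
  assert (HL1 : L0 <= L1 /\ 0 < L1 /\ beta0 * L1 < k * T).
  { unfold L1. destruct (Rle_dec L0 0) as [h|h].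
    - rewrite Rmax_right by lra. assert (0 < q) by nra. split; [lra|split; nra].
    - rewrite Rmax_left by lra. assert (L0 < q) by nra. split; [lra|split; nra]. }
  destruct HL1 as [HL01 [HL1p HL1k]].
  set (A1 := (L1 - ln (1 - p)) / T).
  assert (HA1T : A1 * T = L1 - ln (1 - p)) by (unfold A1; field; lra).
  assert (HAA1 : A <= A1).
  { apply (Rmult_le_reg_r T); auto. rewrite HA1T. unfold L0 in HL01. lra. }
  assert (HA1 : 0 < A1) by lra.
  set (eT := exp (A1 * T)).
  assert (HeT : eT * (1 - p) = exp L1).
  { unfold eT. rewrite HA1T. unfold Rminus at 1. rewrite exp_plus, exp_Ropp, exp_ln by lra. field. lra. }
  assert (HeT0 : 0 < eT) by apply exp_pos.
  set (E1 := eT * (1 - p)).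
  assert (HE1 : 1 < E1).
  { unfold E1. rewrite HeT. rewrite <- exp_0. apply exp_increasing. lra. }
  set (eps := (k * T - beta0 * L1) / (2 * beta0 * L1)).
  assert (Heps : 0 < eps) by (unfold eps; apply Rdiv_lt_0_compat; nra).
  assert (Heps2 : beta0 * (1 + eps) * L1 < k * T).
  { assert (E : beta0 * (1 + eps) * L1 = beta0 * L1 + (k * T - beta0 * L1) / 2) by (unfold eps; field; nra).
    lra. }
  set (c := p * eT / (A1 * (E1 - 1))).
  assert (Hc : 0 <= c).
  { unfold c. apply Rmult_le_pos. nra. left. apply Rinv_0_lt_compat. nra. }
  assert (Hjump : wt A1 c T = (1 - p) * wt A1 c 0).
  { unfold wt, c, E1 in *. rewrite Rmult_0_r, exp_0.
    replace (- A1 * T) with (- (A1 * T)) by ring. rewrite exp_Ropp. fold eT.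
    field. split; [lra|split; nra]. }
  assert (Hw0 : 0 < wt A1 c 0) by (assert (h := wt_pos A1 c 0 HA1 Hc); assert (0 < / A1) by (apply Rinv_0_lt_compat; lra); lra).
  assert (Hlnw : ln (wt A1 c T) - ln (wt A1 c 0) = ln (1 - p)).
  { rewrite Hjump, ln_mult by lra. ring. }
  set (gam := fun n => (/ S (INR n * T) - wt A1 c 0) * exp (A1 * (INR n * T)) * (1 - p) ^ n).
  assert (Hcmp := fun n => cmp_step A A1 beta0 k c (INR n * T) T).
  assert (Hgam : forall n, gam 0%nat <= gam n).
  { induction n as [|n IH]; [lra|].
    eapply Rle_trans; [exact IH|].
    destruct (HlS n) as [L [HL HSL]].
    assert (HLp : 0 < L).
    { destruct (HPS n (proj1 (Hpos n)) (proj2 (Hpos n))) as [_ [H1 _]]. apply H1; exact HL. }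
    destruct (Hcmp n L S I (proj1 hA) HAA1 hbeta0 hT (fun t h => proj1 (Hint n t h)) (Hposi n)
                (proj1 (Hright n)) HL HLp) as [_ H2].
    unfold gam. rewrite HSn, HSL.
    replace ((/ ((1 - p) * L) - wt A1 c 0) * exp (A1 * (INR n * T + T)) * (1 - p) ^ Datatypes.S n)
      with ((/ L - wt A1 c T) * exp (A1 * (INR n * T + T)) * (1 - p) ^ n).
    2:{ rewrite Hjump. simpl. field. split; lra. }
    apply Rmult_le_compat_r. apply pow_le; lra. exact H2. }
  set (G := Rmax (- gam 0%nat) 0).
  assert (HG : 0 <= G) by apply Rmax_r.
  assert (HSb : forall n t, INR n * T <= t < INR n * T + T ->
             - G * (/ E1) ^ n <= / S t - wt A1 c (t - INR n * T)).
  { intros n t Ht.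
    assert (HLp : exists L, filterlim S (at_left (INR n * T + T)) (locally L) /\ 0 < L).
    { destruct (HlS n) as [L [HL _]]. exists L. split; auto.
      destruct (HPS n (proj1 (Hpos n)) (proj2 (Hpos n))) as [_ [H1 _]]. apply H1; exact HL. }
    destruct HLp as [L [HL HLp]].
    destruct (Hcmp n L S I (proj1 hA) HAA1 hbeta0 hT (fun t h => proj1 (Hint n t h)) (Hposi n)
                (proj1 (Hright n)) HL HLp) as [H1 _].
    specialize (H1 t Ht). specialize (Hgam n). unfold gam in Hgam.
    set (X := / S t - wt A1 c (t - INR n * T)) in *.
    set (Da := (/ S (INR n * T) - wt A1 c 0) * exp (A1 * (INR n * T))) in *.
    set (P := (1 - p) ^ n) in *.
    assert (HP : 0 < P) by (apply pow_lt; lra).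
    set (ea := exp (A1 * (INR n * T))) in *.
    assert (Hea : 0 < ea) by apply exp_pos.
    assert (Het : ea <= exp (A1 * t)) by (apply exp_le'; nra).
    assert (Hinv : (/ E1) ^ n = / (ea * P)).
    { rewrite pow_inv. f_equal. unfold ea, P, E1, eT.
      replace (A1 * (INR n * T)) with (INR n * (A1 * T)) by ring.
      rewrite exp_INR, Rpow_mult_distr. ring. }
    rewrite Hinv.
    assert (HG0 : - G <= gam 0%nat) by (unfold G; assert (h := Rmax_l (- gam 0%nat) 0); lra).
    destruct (Rle_or_lt 0 X) as [hX|hX].
    - assert (0 <= G * / (ea * P)) by (apply Rmult_le_pos; [lra|left; apply Rinv_0_lt_compat; nra]). lra.
    - assert (h1 : X * exp (A1 * t) * P <= X * ea * P).
      { apply Rmult_le_compat_r; [lra|]. nra. }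
      assert (h0 : Da * P <= X * exp (A1 * t) * P) by (apply Rmult_le_compat_r; lra).
      assert (h2 : - G <= X * (ea * P)) by (unfold gam in HG0; lra).
      assert (E : - G * / (ea * P) = (- G) / (ea * P)) by (unfold Rdiv; ring).
      rewrite E. apply (Rmult_le_reg_r (ea * P)); [nra|].
      unfold Rdiv. rewrite Rmult_assoc, Rinv_l, Rmult_1_r by nra. exact h2. }

  set (eta := eps / (A1 * (1 + eps))).
  assert (Heta : 0 < eta) by (unfold eta; apply Rdiv_lt_0_compat; nra).
  assert (HE1p : 0 < / E1) by (apply Rinv_0_lt_compat; lra).
  assert (HiE : Rabs (/ E1) < 1).
  { rewrite Rabs_right by lra. rewrite <- Rinv_1. apply Rinv_lt_contravar; lra. }
  assert (HyG : 0 < eta / (G + 1)) by (apply Rdiv_lt_0_compat; lra).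
  destruct (pow_lt_1_zero (/ E1) HiE (eta / (G + 1)) HyG) as [N0 HN0].
  assert (HGn : forall n, (n >= N0)%nat -> G * (/ E1) ^ n <= eta).
  { intros n Hn. specialize (HN0 n Hn).
    rewrite Rabs_right in HN0 by (apply Rle_ge, pow_le; lra).
    assert (h1 : G * (/ E1) ^ n <= G * (eta / (G + 1))) by (apply Rmult_le_compat_l; lra).
    assert (E : G * (eta / (G + 1)) = eta - eta / (G + 1)) by (field; lra). lra. }
  assert (HSup : forall n, (n >= N0)%nat -> forall t, INR n * T < t < INR n * T + T ->
             S t <= (1 + eps) / wt A1 c (t - INR n * T)).
  { intros n Hn t Ht. assert (h := HSb n t (conj (Rlt_le _ _ (proj1 Ht)) (proj2 Ht))).
    assert (h2 := HGn n Hn).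
    destruct (Hposi n t (conj (Rlt_le _ _ (proj1 Ht)) (proj2 Ht))) as [HSt _].
    set (w := wt A1 c (t - INR n * T)) in *.
    assert (Hw : / A1 <= w) by (apply wt_pos; auto).
    assert (HiA : 0 < / A1) by (apply Rinv_0_lt_compat; lra).
    assert (Hr : w / (1 + eps) = w - w * (eps / (1 + eps))) by (field; lra).
    assert (Het : eta = / A1 * (eps / (1 + eps))) by (unfold eta; field; lra).
    assert (Hr0 : 0 < eps / (1 + eps)) by (apply Rdiv_lt_0_compat; lra).
    assert (Hu : w / (1 + eps) <= / S t) by nra.
    assert (Hwp : 0 < w / (1 + eps)) by (apply Rdiv_lt_0_compat; lra).
    rewrite <- (Rinv_inv (S t)).
    replace ((1 + eps) / w) with (/ (w / (1 + eps))) by (field; lra).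
    apply Rinv_le_contravar; lra. }
  set (K := exp (2 * beta0 * (1 + eps) * (A1 * T))).
  set (kap := exp (2 * beta0 * (1 + eps) * (A1 * T + ln (wt A1 c T) - ln (wt A1 c 0)) - 2 * k * T)).
  assert (Hkap : 0 <= kap < 1).
  { split; [left; apply exp_pos|]. unfold kap.
    replace (A1 * T + ln (wt A1 c T) - ln (wt A1 c 0)) with (A1 * T + (ln (wt A1 c T) - ln (wt A1 c 0))) by ring.
    rewrite Hlnw. replace (A1 * T + ln (1 - p)) with L1 by lra.
    assert (0 < 1) by lra. apply (Rlt_le_trans _ (exp 0)); [apply exp_increasing; lra | rewrite exp_0; lra]. }
  assert (Hdec : forall n, (n >= N0)%nat -> _) by
    (intros n Hn; exact (decay_step beta0 k A1 c eps (INR n * T) T S I HA1 Hc hbeta0 ltac:(lra) hT ltac:(lra)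
        (fun t h => proj2 (Hint n t h)) (HSup n Hn) (proj2 (Hright n)) (HlI n))).
  apply (final_lim I T K kap N0 (I (INR N0 * T) * I (INR N0 * T))); auto.
  - left; apply exp_pos.
  - nra.
  - induction m as [|m IH].
    + rewrite Nat.add_0_r. simpl. lra.
    + rewrite Nat.add_succ_r, HSn. destruct (Hdec (N0 + m)%nat ltac:(lia)) as [_ H2].
      eapply Rle_trans. exact H2.
      replace (kap ^ Datatypes.S m) with (kap ^ m * kap) by (simpl; ring).
      rewrite <- Rmult_assoc. apply Rmult_le_compat_r; [lra | exact IH].
  - intros n t Hn Ht. rewrite HSn in Ht. destruct (Hdec n Hn) as [H1 _]. apply H1. exact Ht.
Qed.
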